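(* Let $\mathbf{s}=(s_1,\dots,s_k)$ be a switch pattern, $l\in\{1,\dots,k\}$, and $\alpha,\beta\ge0$ with $\alpha+\beta\le n$. Then $$g^{(l)}_{\alpha,\beta,\mathbf{s}}=f_{\alpha,\beta,\mathbf{s}_l}\,p_{\alpha,\beta}(\mathbf{s},l),\qquad p_{\alpha,\beta}(\mathbf{s},l)=\frac{(n-s_l)_\alpha(s_l)_\beta}{(n)_{\alpha+\beta}},$$ where $f_{\alpha,\beta,\mathbf{s}_l}=\frac{1}{2^b}\sum_{j=0}^b\binom bj a_{\alpha,\beta}(j)\lambda_{n,j,\mathbf{s}_l}$ with $b=\alpha+\beta$, $a_{\alpha,0}\equiv1$ and $a_{\alpha,\beta}(j)=\frac{b-j}{b}a_{\alpha,\beta-1}(j)-\frac jba_{\alpha,\beta-1}(j-1)$ for $\beta\ge1$. For $0\le\alpha+\beta\le4$ these sequences are: $a_{0,0}(j)=1$; $a_{0,1}(j)=(-1)^j$, $a_{1,0}(j)=1$; $a_{0,2}(j)=(-1)^j$, $a_{1,1}(j)=1-j$, $a_{2,0}(j)=1$; $a_{0,3}(j)=(-1)^j$, $a_{1,2}(j)=(-1)^j(1-2j/3)$, $a_{2,1}(j)=1-2j/3$, $a_{3,0}(j)=1$; $a_{0,4}(j)=(-1)^j$, $a_{1,3}(j)=(-1)^j(1-j/2)$, $a_{2,2}(j)=1-j(4-j)/3$, $a_{3,1}(j)=1-j/2$, $a_{4,0}(j)=1$.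
   Context: Lightbulb process on $n$ bulbs with $k$ stages and switch pattern $\mathbf{s}$: all bulbs initially off unless stated; at stage $r$ a uniformly random subset of exactly $s_r$ bulbs is toggled, independently across stages; $X_{rj}=1$ iff bulb $j$ is toggled at stage $r$ ($X_{0j}$ denotes the deterministic initial status), and $X_j=(\sum_{r=0}^kX_{rj})\bmod 2$ indicates bulb $j$ is on at the end. Define, for all bulbs initially off, $g^{(l)}_{\alpha,\beta,\mathbf{s}}=P(X_1=\dots=X_{\alpha+\beta}=0,\ X_{l1}=\dots=X_{l\alpha}=0,\ X_{l,\alpha+1}=\dots=X_{l,\alpha+\beta}=1)$. For a pattern $\mathbf{t}$, $f_{\alpha,\beta,\mathbf{t}}=P(X_i=0,\ i=1,\dots,\alpha+\beta\mid X_{0i}=0,\ i\le\alpha;\ X_{0i}=1,\ \alpha<i\le\alpha+\beta)$ for the process with pattern $\mathbf{t}$. $\mathbf{s}_l=(s_1,\dots,s_{l-1},s_{l+1},\dots,s_k)$. $(n)_t=n(n-1)\cdots(n-t+1)$, $\lambda_{n,j,s}=\sum_{t=0}^j\binom jt(-2)^t\frac{(s)_t}{(n)_t}$, $\lambda_{n,j,\mathbf{t}}=\prod_r\lambda_{n,j,t_r}$. *)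

(* Defs.v *)
From HB Require Import structures.
From mathcomp Require Import all_boot all_order all_algebra.
Set Implicit Arguments. Unset Strict Implicit. Unset Printing Implicit Defensive.
Import Order.TTheory GRing.Theory Num.Theory.
Local Open Scope ring_scope.

Section Lightbulb.
Variable R : realFieldType.
Variable n : nat.
Variable I : finType.

(* An outcome: for each stage r, the set of bulbs toggled at stage r. *)
Definition outcome := {ffun I -> {set 'I_n}}.

(* Outcomes compatible with switch pattern s (exactly s r bulbs at stage r);
   each is equally likely (independent uniform subsets). *)
Definition valid (s : I -> nat) : {set outcome} :=
  [set w : outcome | [forall r, #|w r| == s r]].

Definition prob (s : I -> nat) (E : pred outcome) : R :=
  (#|[set w in valid s | E w]|)%:R / (#|valid s|)%:R.

Definition final (x0 : 'I_n -> bool) (w : outcome) (j : 'I_n) : bool :=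
  x0 j (+) odd #|[set r : I | j \in w r]|.
End Lightbulb.

(* g^{(l)}_{alpha,beta,s}: all bulbs initially off; bulbs 1..alpha+beta
   (indices 0..alpha+beta-1) end off, bulbs 1..alpha not toggled at stage l,
   bulbs alpha+1..alpha+beta toggled at stage l. *)
Definition g_prob (R : realFieldType) (n k : nat) (s : 'I_k -> nat) (l : 'I_k)
  (alpha beta : nat) : R :=
  prob R s (fun w : outcome n 'I_k =>
    [forall j : 'I_n, (j < alpha + beta)%N ==>
        ~~ final (fun _ => false) w j && ((j \in w l) == (alpha <= j)%N)]).

(* f_{alpha,beta,t}: bulbs 1..alpha initially off, alpha+1..alpha+beta
   initially on (others off); probability that bulbs 1..alpha+beta all end off. *)
Definition f_prob (R : realFieldType) (n : nat) (I : finType) (t : I -> nat)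
  (alpha beta : nat) : R :=
  prob R t (fun w : outcome n I =>
    [forall j : 'I_n, (j < alpha + beta)%N ==>
        ~~ final (fun j : 'I_n => (alpha <= j)%N && (j < alpha + beta)%N) w j]).

Definition drop_stage (k : nat) (s : 'I_k -> nat) (l : 'I_k) : 'I_k.-1 -> nat :=
  fun i => s (lift l i).

Definition lam (R : realFieldType) (n j s : nat) : R :=
  \sum_(t < j.+1) ('C(j, t))%:R * (-2) ^+ t * ((s ^_ t)%:R / (n ^_ t)%:R).

Definition lamP (R : realFieldType) (n j : nat) (I : finType) (t : I -> nat) : R :=
  \prod_(r : I) lam R n j (t r).

Fixpoint acoef (R : realFieldType) (alpha beta j : nat) : R :=
  match beta with
  | 0 => 1
  | beta'.+1 =>
      let b := (alpha + beta'.+1)%N in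
      ((b%:R - j%:R) / b%:R) * acoef R alpha beta' j
      - (j%:R / b%:R) * acoef R alpha beta' j.-1
  end.

Definition p_coef (R : realFieldType) (n k : nat) (s : 'I_k -> nat) (l : 'I_k)
  (alpha beta : nat) : R :=
  ((n - s l) ^_ alpha)%:R * ((s l) ^_ beta)%:R / (n ^_ (alpha + beta))%:R.

Definition f_formula (R : realFieldType) (n : nat) (I : finType) (t : I -> nat)
  (alpha beta : nat) : R :=
  let b := (alpha + beta)%N in
  (2 ^+ b)^-1 * \sum_(j < b.+1) ('C(b, j))%:R * acoef R alpha beta j * lamP R n j t.

(* Main.v *)
Require Import Defs.
From HB Require Import structures.
From mathcomp Require Import all_boot all_order all_algebra.
From mathcomp Require Import zify ring lra.
Set Implicit Arguments. Unset Strict Implicit. Unset Printing Implicit Defensive.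
Import Order.TTheory GRing.Theory Num.Theory.
Local Open Scope ring_scope.

Section Gen.
Variable R : comNzRingType.

Lemma prod1D_set (T : finType) (x : T -> R) :
  \prod_i (1 + x i) = \sum_(S : {set T}) \prod_(i in S) x i.
Proof.
transitivity (\prod_(i : T) \sum_(b : bool) (if b then x i else 1)).
  by apply: eq_bigr => i _; rewrite big_bool /= addrC.
rewrite bigA_distr_bigA.
rewrite (reindex (fun S : {set T} => [ffun i => i \in S])); last first.
  exists (fun f : {ffun T -> bool} => [set i | f i]) => [S _|f _].
    by apply/setP => i; rewrite inE ffunE.
  by apply/ffunP => i; rewrite ffunE inE.
apply: eq_bigr => S _; rewrite [RHS]big_mkcond; apply: eq_bigr => i _.
by rewrite ffunE.
Qed.

Lemma prod1D_subset (T : finType) (P : {set T}) (x : T -> R) :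
  \prod_(i in P) (1 + x i) = \sum_(S : {set T} | S \subset P) \prod_(i in S) x i.
Proof.
rewrite big_mkcond [RHS]big_mkcond /=.
have := prod1D_set (fun i => if i \in P then x i else 0) => /= E.
transitivity (\prod_i (1 + (if i \in P then x i else 0))).
  by apply: eq_bigr => i _; case: (i \in P); rewrite ?addr0.
rewrite E; apply: eq_bigr => S _.
case: (boolP (S \subset P)) => [/subsetP SP|/subsetPn [i iS iP]].
  by apply: eq_bigr => i /SP ->.
by rewrite (bigD1 i) //= (negbTE iP) mul0r.
Qed.

End Gen.

Section Helpers.
Variable R : realFieldType.

Lemma sum_subsets_card (T : finType) (P : {set T}) (G : nat -> R) :
  \sum_(S : {set T} | S \subset P) G #|S|
  = \sum_(t < #|P|.+1) ('C(#|P|, t))%:R * G t.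
Proof.
rewrite (partition_big (fun S : {set T} => (inord #|S| : 'I_(#|P|.+1))) xpredT) //=.
apply: eq_bigr => t _.
transitivity (\sum_(S in [set S : {set T} | S \subset P & #|S| == t]) G t).
  apply: eq_big => S; rewrite ?inE.
    case SP: (S \subset P) => //=.
    have := subset_leq_card SP; rewrite -ltnS => h.
    apply/eqP/eqP => E; first by rewrite -E inordK.
    by apply: val_inj; rewrite /= inordK.
  case/andP => SP /eqP <-.
  have := subset_leq_card SP; rewrite -ltnS => h.
  by rewrite inordK.
by rewrite sumr_const cards_draws mulr_natl.
Qed.

Lemma sum_ind_card (T : finType) (P Q : pred T) :
  \sum_(x | P x) ((Q x : nat)%:R : R) = (#|[set x | P x && Q x]|)%:R.
Proof.
rewrite -sum1_card natr_sum [LHS]big_mkcond [RHS]big_mkcond.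
by apply: eq_bigr => x _; rewrite inE; case: (P x); case: (Q x).
Qed.

Lemma card_fix_inter (T : finType) (P Q : {set T}) s : Q \subset P ->
  #|[set A : {set T} | (#|A| == s) && (A :&: P == Q)]|
  = if (#|Q| <= s)%N then 'C(#|T| - #|P|, s - #|Q|) else 0%N.
Proof.
move=> /subsetP QP.
case: ifP => hQs; last first.
  apply: eq_card0 => A; rewrite !inE; apply/negP => /andP[/eqP hA /eqP hAQ].
  move: hQs; rewrite -hAQ -hA.
  by rewrite subset_leq_card // subsetIl.
have -> : (#|T| - #|P| = #|~: P|)%N by rewrite -(cardsC P) addKn.
rewrite -cards_draws.
rewrite -[in RHS](@card_in_imset _ _ (fun B => Q :|: B)); last first.
  move=> B1 B2; rewrite !inE => /andP[/subsetP h1 _] /andP[/subsetP h2 _] E.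
  apply/setP => x; have := congr1 (fun X : {set T} => x \in X) E; rewrite /= !inE.
  case xP: (x \in P).
    have /negbTE -> : x \notin B1 by apply/negP => /h1; rewrite inE xP.
    have /negbTE -> : x \notin B2 by apply/negP => /h2; rewrite inE xP.
    by [].
  have /negbTE -> // : x \notin Q by apply/negP => /QP; rewrite xP.
apply: eq_card => A; rewrite !inE.
apply/andP/imsetP => [[/eqP hA /eqP hAQ]|[B]].
  exists (A :\: P).
    rewrite inE; apply/andP; split.
      by apply/subsetP => x; rewrite !inE => /andP[].
    by rewrite cardsD hAQ hA.
  apply/setP => x; rewrite !inE; have := congr1 (fun X : {set T} => x \in X) hAQ.
  rewrite /= !inE; case xP: (x \in P); rewrite ?andbT ?andbF => <- //=.
  by rewrite orbC.
rewrite inE => /andP[/subsetP hB /eqP hBc] ->; split.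
  rewrite cardsU hBc.
  have -> : Q :&: B = set0.
    apply/setP => x; rewrite !inE; apply/negP => /andP[/QP xP /hB].
    by rewrite inE xP.
  rewrite cards0 subn0; apply/eqP; lia.
apply/eqP/setP => x; rewrite !inE.
case xP: (x \in P); rewrite ?andbT ?andbF.
  have /negbTE -> : x \notin B by apply/negP => /hB; rewrite inE xP.
  by rewrite orbF.
by apply/esym/negbTE/negP => /QP; rewrite xP.
Qed.


Lemma count_ratio (n p q s : nat) : (q <= p)%N -> (p <= n)%N -> (s <= n)%N ->
  ((if (q <= s)%N then 'C(n - p, s - q) else 0%N)%:R : R) * (n ^_ p)%:R
  = ('C(n, s))%:R * (s ^_ q)%:R * ((n - s) ^_ (p - q))%:R.
Proof.
move=> hqp hpn hsn.
case: ifP => hqs; last first.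
  by rewrite (@ffact_small s q) ?mul0r ?mulr0 ?mul0r //; lia.
case: (leqP (s - q) (n - p)) => h; last first.
  by rewrite bin_small // (@ffact_small (n - s) (p - q)) ?mul0r ?mulr0 //; lia.
have e1 := bin_fact h.
have e2 := ffact_fact hpn.
have e3 := bin_fact hsn.
have e4 := ffact_fact hqs.
have hm : (p - q <= n - s)%N by lia.
have e5 := ffact_fact hm.
have em : (n - p - (s - q) = n - s - (p - q))%N by lia.
rewrite em in e1.
move: e1 e2 e3 e4 e5.
set a := 'C(n - p, s - q); set b := n ^_ p; set c := 'C(n, s); set d := s ^_ q.
set e := (n - s) ^_ (p - q).
set u := (s - q)`!; set v := (n - s - (p - q))`!; set w := (n - p)`!.
set N := n`!; set x := s`!; set y := (n - s)`!.
move=> /(congr1 (fun m => m%:R : R)) e1 /(congr1 (fun m => m%:R : R)) e2.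
move=> /(congr1 (fun m => m%:R : R)) e3 /(congr1 (fun m => m%:R : R)) e4.
move=> /(congr1 (fun m => m%:R : R)) e5.
rewrite !natrM in e1 e2 e3 e4 e5.
have nz : forall m, ((m`!)%:R : R) != 0 by move=> m; rewrite pnatr_eq0 -lt0n fact_gt0.
have ua := nz (s - q)%N; have va := nz (n - s - (p - q))%N; have wa := nz (n - p)%N.
have xa := nz s; have ya := nz (n - s)%N.
have ea : (a%:R : R) = w%:R / (u%:R * v%:R) by rewrite -e1 mulfK // mulf_neq0.
have eb : (b%:R : R) = N%:R / w%:R by rewrite -e2 mulfK.
have ec : (c%:R : R) = N%:R / (x%:R * y%:R) by rewrite -e3 mulfK // mulf_neq0.
have ed : (d%:R : R) = x%:R / u%:R by rewrite -e4 mulfK.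
have ee : (e%:R : R) = y%:R / v%:R by rewrite -e5 mulfK.
rewrite ea eb ec ed ee; field.
by rewrite ua va wa xa ya.
Qed.


Lemma stage_sum n s (S : {set 'I_n}) : (s <= n)%N ->
  \sum_(A : {set 'I_n} | #|A| == s) \prod_(i in S) ((-1) ^+ (i \in A) : R)
  = ('C(n, s))%:R * lam R n #|S| s.
Proof.
move=> hsn.
transitivity (\sum_(A : {set 'I_n} | #|A| == s)
   \sum_(T : {set 'I_n} | T \subset S) ((-2) ^+ #|T| * ((T \subset A) : nat)%:R : R)).
  apply: eq_bigr => A _.
  transitivity (\prod_(i in S) (1 + (-2) * ((i \in A) : nat)%:R : R)).
    by apply: eq_bigr => i _; case: (i \in A) => /=; rewrite ?mulr1 ?mulr0 ?addr0 ?expr1 ?expr0 //; ring.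
  rewrite prod1D_subset; apply: eq_bigr => T _.
  rewrite big_split /= prodr_const; congr (_ * _).
  case: (boolP (T \subset A)) => [/subsetP h|/subsetPn [i iT iA]].
    by rewrite big1 // => i /h ->.
  by rewrite (bigD1 i) //= (negbTE iA) mul0r.
rewrite exchange_big /=.
have ec : forall (A T : {set 'I_n}), (A :&: T == T) = (T \subset A).
  by move=> A T; apply/eqP/setIidPr.
transitivity (\sum_(T : {set 'I_n} | T \subset S)
   ((-2) ^+ #|T| * (('C(n, s))%:R * ((s ^_ #|T|)%:R / (n ^_ #|T|)%:R)) : R)).
  apply: eq_bigr => T _.
  rewrite -mulr_sumr sum_ind_card; congr (_ * _).
  have -> : [set x : {set 'I_n} | (#|x| == s) && (T \subset x)]
          = [set x : {set 'I_n} | (#|x| == s) && (x :&: T == T)].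
    by apply/setP => A; rewrite !inE ec.
  rewrite card_fix_inter // card_ord.
  have hT : (#|T| <= n)%N by have := max_card T; rewrite card_ord.
  have nz : ((n ^_ #|T|)%:R : R) != 0 by rewrite pnatr_eq0 -lt0n ffact_gt0.
  apply: (mulIf nz).
  rewrite (@count_ratio n #|T| #|T| s) // subnn ffactn0 mulr1 -!mulrA mulVf ?mulr1 //.
rewrite (sum_subsets_card S (fun t => (-2) ^+ t * (('C(n, s))%:R * ((s ^_ t)%:R / (n ^_ t)%:R)))).
rewrite /lam mulr_sumr; apply: eq_bigr => t _; ring.
Qed.


Lemma sum_valid_prod n (I : finType) (t : I -> nat) (h : I -> {set 'I_n} -> R) :
  \sum_(w in valid n t) \prod_r h r (w r)
  = \prod_r \sum_(A : {set 'I_n} | #|A| == t r) h r A.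
Proof.
under eq_bigr do rewrite big_mkcond /=.
rewrite bigA_distr_bigA big_mkcond /=; apply: eq_bigr => w _.
rewrite inE; case: (boolP [forall r, #|w r| == t r]) => [/forallP H|].
  by apply: eq_bigr => r _; rewrite H.
rewrite negb_forall => /existsP [r /negbTE Hr].
by rewrite (bigD1 r) //= Hr mul0r.
Qed.

Lemma card_valid n (I : finType) (t : I -> nat) : (forall r, t r <= n)%N ->
  ((#|valid n t|)%:R : R) = \prod_r ('C(n, t r))%:R.
Proof.
move=> ht.
transitivity (\sum_(w in valid n t) \prod_(r : I) (1:R)).
  by rewrite sumr_const prodr_const expr1n.
rewrite (sum_valid_prod t (fun _ _ => 1)); apply: eq_bigr => r _.
have := @stage_sum n (t r) set0 (ht r).
rewrite cards0 /lam big_ord1 bin0 expr0 ffactn0 divr1 !mulr1.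
by under eq_bigr do rewrite big_set0.
Qed.

Lemma prob_sum n (I : finType) (t : I -> nat) (E : pred (outcome n I)) :
  prob R t E = (\sum_(w in valid n t) ((E w : nat)%:R : R)) / (#|valid n t|)%:R.
Proof. by rewrite /prob sum_ind_card. Qed.


Lemma card_range n m p : (p <= n)%N ->
  #|[set i : 'I_n | (m <= i)%N && (i < p)%N]| = (p - m)%N.
Proof.
elim: p => [|p IH] hp.
  by rewrite sub0n; apply: eq_card0 => i; rewrite inE ltn0 andbF.
have hp' : (p < n)%N by [].
case: (leqP m p) => hmp.
  have -> : [set i : 'I_n | (m <= i)%N && (i < p.+1)%N]
          = (Ordinal hp') |: [set i : 'I_n | (m <= i)%N && (i < p)%N].
    apply/setP => i; rewrite !inE; case: (boolP (i == Ordinal hp')) => [/eqP -> /=|hi].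
      by rewrite hmp ltnSn.
    have hi' : (i == p :> nat) = false.
      by apply/negbTE; apply: contra hi => /eqP e; apply/eqP/val_inj.
    by rewrite ltnS [(i <= p)%N]leq_eqVlt hi' /=.
  rewrite cardsU1 IH ?(ltnW hp) // inE ltnn andbF /=; lia.
have -> : (p.+1 - m = 0)%N by lia.
by apply: eq_card0 => i; rewrite inE; apply/negbTE/negP => /andP[h1 h2]; lia.
Qed.

Lemma coef_binpoly (al be j : nat) :
  (((1 + 'X) ^+ al * (1 - 'X) ^+ be : {poly R})`_j)
  = ('C(al + be, j))%:R * acoef R al be j.
Proof.
elim: be j => [|be IH] j.
  rewrite expr0 mulr1 addn0 /= mulr1.
  elim: al j => [|al IHa] j; first by rewrite expr0 coefC bin0n; case: j.
  rewrite exprSr mulrDr mulr1 coefD coefMX IHa.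
  case: j => [|j] /=; first by rewrite !bin0 addr0.
  by rewrite IHa binS natrD addrC.
have nb : (((al + be).+1)%:R : R) != 0 by rewrite pnatr_eq0.
rewrite exprSr mulrA mulrBr mulr1 coefB coefMX !IH addnS /=.
case: j => [|j] /=.
  by rewrite !bin0 subr0 ?mul1r subr0 mul0r mul0r subr0 addnS divff // mul1r.
rewrite addnS; set b := (al + be)%N.
case: (leqP j b) => hjb; last first.
  by rewrite !bin_small ?mul0r ?subr0 //; lia.
have F1 : ('C(b.+1, j.+1) * (b - j) = b.+1 * 'C(b, j.+1))%N.
  rewrite binS mulnDl [('C(b, j) * _)%N]mulnC -mul_bin_left.
  rewrite [(_ * (b - j))%N]mulnC -mulnDl.
  have -> : (b - j + j.+1 = b.+1)%N by clearbody b; lia.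
  by rewrite mulnC.
have F2 : ('C(b.+1, j.+1) * j.+1 = b.+1 * 'C(b, j))%N.
  by rewrite (mul_bin_diag b.+1 j) mulnC.
move: F1 F2 => /(congr1 (fun m => m%:R : R)) F1 /(congr1 (fun m => m%:R : R)) F2.
rewrite !natrM in F1 F2.
have e1 : ('C(b, j.+1)%:R : R) = 'C(b.+1, j.+1)%:R * (b - j)%:R / b.+1%:R.
  by rewrite F1; field; rewrite nat1r pnatr_eq0 //.
have e2 : ('C(b, j)%:R : R) = 'C(b.+1, j.+1)%:R * j.+1%:R / b.+1%:R.
  by rewrite F2; field; rewrite nat1r pnatr_eq0 //.
rewrite e1 e2 -natrB //.
by rewrite subSS; field; rewrite nat1r pnatr_eq0 //.
Qed.


Definition eps (al : nat) n (i : 'I_n) : R := (-1) ^+ (al <= i)%N.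

Lemma poly_prod (n al be : nat) : (al + be <= n)%N ->
  \sum_(S : {set 'I_n} | S \subset [set j : 'I_n | (j < al + be)%N])
     (\prod_(i in S) eps al i)%:P * 'X^#|S| = (1 + 'X) ^+ al * (1 - 'X) ^+ be.
Proof.
move=> hn.
transitivity (\prod_(i in [set j : 'I_n | (j < al + be)%N]) (1 + (eps al i)%:P * 'X)).
  rewrite prod1D_subset; apply: eq_bigr => S _.
  by rewrite big_split /= prodr_const rmorph_prod.
rewrite (bigID (fun i : 'I_n => (al <= i)%N)) /= mulrC.
congr (_ * _).
  rewrite (eq_bigl (fun i => i \in [set i : 'I_n | (0 <= i)%N && (i < al)%N])); last first.
    move=> i; rewrite !inE /=.
    by apply/idP/idP => [/andP[h1 h2]|h]; [lia | apply/andP; split; lia].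
  rewrite (eq_bigr (fun _ => 1 + 'X)); last first.
    by move=> i; rewrite inE => /andP[_ h]; rewrite /eps leqNgt h /= polyC1 mul1r.
  by rewrite prodr_const card_range ?subn0 //; lia.
rewrite (eq_bigl (fun i => i \in [set i : 'I_n | (al <= i)%N && (i < al + be)%N])); last first.
  move=> i; rewrite !inE /=.
  by apply/idP/idP => /andP[h1 h2]; apply/andP; split.
rewrite (eq_bigr (fun _ => 1 - 'X)); last first.
  by move=> i; rewrite inE => /andP[h _]; rewrite /eps h /= expr1 polyCN polyC1 mulN1r.
rewrite prodr_const card_range //; congr (_ ^+ _); lia.
Qed.

Lemma sum_by_card (n b : nat) (P : {set 'I_n}) (c : {set 'I_n} -> R) (L : nat -> R) :
  #|P| = b ->
  \sum_(S : {set 'I_n} | S \subset P) c S * L #|S|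
  = \sum_(j < b.+1) (\sum_(S : {set 'I_n} | S \subset P) c S * (#|S| == j)%:R) * L j.
Proof.
move=> hP.
transitivity (\sum_(S : {set 'I_n} | S \subset P) \sum_(j < b.+1) c S * (#|S| == j)%:R * L j).
  apply: eq_bigr => S SP.
  have hS : (#|S| < b.+1)%N by rewrite ltnS -hP subset_leq_card.
  rewrite (bigD1 (Ordinal hS)) //= eqxx mulr1 big1 ?addr0 // => j hj.
  have -> : (#|S| == j) = false.
    by apply/negbTE; apply: contra hj => /eqP e; apply/eqP/val_inj.
  by rewrite mulr0 mul0r.
rewrite exchange_big /=; apply: eq_bigr => j _; rewrite mulr_suml //.
Qed.


Lemma card_lt n b : (b <= n)%N -> #|[set j : 'I_n | (j < b)%N]| = b.
Proof.
move=> hb; rewrite -{2}(subn0 b) -(card_range 0 hb).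
by apply: eq_card => j; rewrite !inE.
Qed.

Lemma sum_formula n al be (L : nat -> R) : (al + be <= n)%N ->
  \sum_(S : {set 'I_n} | S \subset [set j : 'I_n | (j < al + be)%N])
     (\prod_(i in S) eps al i) * L #|S|
  = \sum_(j < (al + be).+1) ('C(al + be, j))%:R * acoef R al be j * L j.
Proof.
move=> hn; rewrite (@sum_by_card n (al + be)) ?card_lt //.
apply: eq_bigr => j _; congr (_ * _).
rewrite -coef_binpoly -(poly_prod hn) coef_sum; apply: eq_bigr => S _.
by rewrite coefCM coefXn eq_sym.
Qed.

Lemma sign_card (I : finType) (p : pred I) :
  (-1) ^+ #|[set r | p r]| = \prod_r ((-1) ^+ (p r) : R).
Proof.
rewrite -prodr_const [RHS]big_mkcond /= [LHS]big_mkcond /=.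
by apply: eq_bigr => r _; rewrite inE; case: (p r).
Qed.


Lemma f_expand n (I : finType) (t : I -> nat) al be :
  (forall r, t r <= n)%N -> (al + be <= n)%N ->
  f_prob R n t al be = (2 ^+ (al + be))^-1 *
    \sum_(S : {set 'I_n} | S \subset [set j : 'I_n | (j < al + be)%N])
      (\prod_(i in S) eps al i) * lamP R n #|S| t.
Proof.
move=> ht hn.
rewrite /f_prob prob_sum card_valid //.
set P := [set j : 'I_n | (j < al + be)%N].
set x0 := (fun j : 'I_n => (al <= j)%N && (j < al + be)%N).
have step1 : forall w : outcome n I,
  (([forall j : 'I_n, (j < al + be)%N ==> ~~ final x0 w j] : nat)%:R : R)
  = (2 ^+ (al + be))^-1 * \sum_(S : {set 'I_n} | S \subset P)
      \prod_(i in S) ((-1) ^+ (final x0 w i) : R).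
  move=> w.
  transitivity (\prod_(i in P) (((~~ final x0 w i) : nat)%:R : R)).
    case: (boolP [forall j : 'I_n, _]) => [/forallP H|].
      rewrite big1 // => i; rewrite inE => hi; have := H i; rewrite hi /= => /negbTE ->.
      by [].
    rewrite negb_forall => /existsP [i]; rewrite negb_imply => /andP [hi hf].
    by rewrite (bigD1 i) ?inE //= negbK in hf *; rewrite hf mul0r.
  transitivity (\prod_(i in P) ((2 : R)^-1 * (1 + (-1) ^+ (final x0 w i)))).
    apply: eq_bigr => i _; case: (final x0 w i) => /=.
      by rewrite expr1 subrr mulr0.
    by rewrite expr0; field.
  rewrite big_split /= prodr_const card_lt // exprVn prod1D_subset //.
have step2 : forall (w : outcome n I) (S : {set 'I_n}), S \subset P ->
  \prod_(i in S) ((-1) ^+ (final x0 w i) : R)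
  = (\prod_(i in S) eps al i) * \prod_r \prod_(i in S) ((-1) ^+ (i \in w r) : R).
  move=> w S /subsetP SP.
  rewrite [X in _ * X]exchange_big /= -big_split /=.
  apply: eq_bigr => i iS.
  have := SP i iS; rewrite inE => hi.
  rewrite /final signr_addb signr_odd sign_card /eps /x0 hi andbT.
  by [].
have step3 : forall S : {set 'I_n}, S \subset P ->
  \sum_(w in valid n t) \prod_(i in S) ((-1) ^+ (final x0 w i) : R)
  = (\prod_(i in S) eps al i) * ((\prod_r ('C(n, t r))%:R) * lamP R n #|S| t).
  move=> S SP.
  rewrite (eq_bigr _ (fun w _ => step2 w S SP)) -mulr_sumr.
  rewrite (sum_valid_prod t (fun r A => \prod_(i in S) ((-1) ^+ (i \in A) : R))).
  congr (_ * _); rewrite /lamP -big_split /=; apply: eq_bigr => r _.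
  exact: stage_sum.
have nz : (\prod_r ('C(n, t r))%:R : R) != 0.
  by apply/prodf_neq0 => r _; rewrite pnatr_eq0 -lt0n bin_gt0.
rewrite (eq_bigr _ (fun w _ => step1 w)) -mulr_sumr exchange_big /=.
rewrite (eq_bigr _ step3) -!mulrA; congr (_ * _).
rewrite mulr_suml; apply: eq_bigr => S _.
by field.
Qed.


Lemma f_main n (I : finType) (t : I -> nat) al be :
  (forall r, t r <= n)%N -> (al + be <= n)%N ->
  f_prob R n t al be = f_formula R n t al be.
Proof.
by move=> ht hn; rewrite f_expand // (sum_formula (fun j => lamP R n j t) hn).
Qed.

Definition psi n k (l : 'I_k) (A : {set 'I_n}) (w : outcome n 'I_k.-1) : outcome n 'I_k :=
  [ffun r => if unlift l r is Some i then w i else A].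

Lemma sum_split n k (l : 'I_k) (F : outcome n 'I_k -> R) :
  \sum_(w : outcome n 'I_k) F w
  = \sum_(A : {set 'I_n}) \sum_(w : outcome n 'I_k.-1) F (psi l A w).
Proof.
rewrite pair_bigA /=.
rewrite (reindex (fun p : {set 'I_n} * outcome n 'I_k.-1 => psi l p.1 p.2)) //.
exists (fun w : outcome n 'I_k => (w l, [ffun i => w (lift l i)] : outcome n 'I_k.-1)).
  move=> [A w] _ /=; congr (_, _).
    by rewrite /psi ffunE unlift_none.
  by apply/ffunP => i; rewrite !ffunE liftK.
move=> w _ /=; apply/ffunP => r; rewrite /psi ffunE.
by case: unliftP => [i ->|->]; rewrite ?ffunE.
Qed.

Lemma card_sum_nat (I : finType) (p : pred I) : #|[set r | p r]| = (\sum_r (p r : nat))%N.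
Proof.
by rewrite -sum1_card big_mkcond /=; apply: eq_bigr => r _; rewrite inE; case: (p r).
Qed.


Lemma psi_l n k (l : 'I_k) (A : {set 'I_n}) w : psi l A w l = A.
Proof. by rewrite /psi ffunE unlift_none. Qed.

Lemma psi_lift n k (l : 'I_k) (A : {set 'I_n}) w i : psi l A w (lift l i) = w i.
Proof. by rewrite /psi ffunE liftK. Qed.

Lemma valid_psi n k (s : 'I_k -> nat) (l : 'I_k) A w :
  (psi l A w \in valid n s) = (#|A| == s l) && (w \in valid n (drop_stage s l)).
Proof.
rewrite !inE; apply/forallP/andP => [H|[H1 /forallP H2] r].
  split; first by have := H l; rewrite psi_l.
  by apply/forallP => i; have := H (lift l i); rewrite psi_lift.
by case: (unliftP l r) => [i ->|->]; rewrite ?psi_lift ?psi_l //; exact: H2.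
Qed.

Lemma card_psi n k (l : 'I_k) (A : {set 'I_n}) w (j : 'I_n) :
  #|[set r | j \in psi l A w r]| = ((j \in A) + #|[set i | j \in w i]|)%N.
Proof.
rewrite !card_sum_nat (bigD1_ord l) //= psi_l; congr (_ + _)%N.
by apply: eq_bigr => i _; rewrite psi_lift.
Qed.

Lemma Eg_psi n k (l : 'I_k) (A : {set 'I_n}) w al be :
  [forall j : 'I_n, (j < al + be)%N ==> ~~ final (fun _ => false) (psi l A w) j
      && ((j \in psi l A w l) == (al <= j)%N)]
  = (A :&: [set j : 'I_n | (j < al + be)%N] == [set j : 'I_n | (al <= j)%N && (j < al + be)%N])
    && [forall j : 'I_n, (j < al + be)%N ==>
          ~~ final (fun j : 'I_n => (al <= j)%N && (j < al + be)%N) w j].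
Proof.
have key : forall j : 'I_n, (j < al + be)%N ->
  (~~ final (fun _ => false) (psi l A w) j && ((j \in psi l A w l) == (al <= j)%N))
  = ((j \in A) == (al <= j)%N) &&
    ~~ final (fun j : 'I_n => (al <= j)%N && (j < al + be)%N) w j.
  move=> j hj; rewrite /final card_psi psi_l hj andbT oddD /=.
  by case: (j \in A); case: (al <= j)%N; case: (odd #|[set i | j \in w i]|).
apply/forallP/andP => [H|[/eqP H1 /forallP H2] j].
  split.
    apply/eqP/setP => j; rewrite !inE; have := H j.
    case hj: (j < al + be)%N; rewrite ?andbT ?andbF //=.
    by rewrite key // => /andP[/eqP -> _].
  apply/forallP => j; have := H j; case hj: (j < al + be)%N => //=.
  by rewrite key // => /andP[].
apply/implyP => hj; rewrite key //; apply/andP; split; last by have := H2 j; rewrite hj.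
have := congr1 (fun X : {set 'I_n} => j \in X) H1; rewrite /= !inE hj !andbT => ->.
by [].
Qed.


Lemma g_main n k (s : 'I_k -> nat) (l : 'I_k) al be :
  (forall r, s r <= n)%N -> (al + be <= n)%N ->
  g_prob R n s l al be = f_prob R n (drop_stage s l) al be * p_coef R n s l al be.
Proof.
move=> hs hn.
have hs' : forall i, (drop_stage s l i <= n)%N by move=> i; exact: hs.
rewrite /g_prob /f_prob !prob_sum !card_valid //.
set P := [set j : 'I_n | (j < al + be)%N].
set Q := [set j : 'I_n | (al <= j)%N && (j < al + be)%N].
set Ef := (fun w : outcome n 'I_k.-1 => [forall j : 'I_n, (j < al + be)%N ==>
          ~~ final (fun j : 'I_n => (al <= j)%N && (j < al + be)%N) w j]).
set N := #|[set A : {set 'I_n} | (#|A| == s l) && (A :&: P == Q)]|.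
have num : \sum_(w in valid n s) (([forall j : 'I_n, (j < al + be)%N ==>
        ~~ final (fun _ => false) w j && ((j \in w l) == (al <= j)%N)] : nat)%:R : R)
    = N%:R * \sum_(w in valid n (drop_stage s l)) ((Ef w : nat)%:R).
  rewrite big_mkcond (sum_split l) /=.
  rewrite (eq_bigr (fun A : {set 'I_n} => ((((#|A| == s l) && (A :&: P == Q)) : nat)%:R : R) *
      \sum_(w : outcome n 'I_k.-1) (if w \in valid n (drop_stage s l) then (Ef w : nat)%:R else 0))).
    rewrite -mulr_suml; congr (_ * _); last by rewrite [RHS]big_mkcond.
    by rewrite -(sum_ind_card xpredT); apply: eq_bigr.
  move=> A _; rewrite mulr_sumr; apply: eq_bigr => w _.
  rewrite valid_psi Eg_psi -/P -/Q -/(Ef w).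
  by case: (#|A| == s l); case: (A :&: P == Q); case: (w \in _); case: (Ef w);
    rewrite /= ?mul1r ?mul0r ?mulr1 ?mulr0.
rewrite num.
have QP : Q \subset P by apply/subsetP => j; rewrite !inE => /andP[].
have cQ : #|Q| = be by rewrite card_range //; lia.
have hN : N = if (be <= s l)%N then 'C(n - (al + be), s l - be) else 0%N.
  by rewrite /N card_fix_inter // card_ord card_lt // cQ.
have e := @count_ratio n (al + be) be (s l) (leq_addl _ _) hn (hs l).
rewrite -hN addnK in e.
have nzf : ((n ^_ (al + be))%:R : R) != 0 by rewrite pnatr_eq0 -lt0n ffact_gt0.
have eN : (N%:R : R) = 'C(n, s l)%:R * (s l ^_ be)%:R * ((n - s l) ^_ al)%:R / (n ^_ (al + be))%:R.
  by rewrite -e mulfK.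
have nzC : ('C(n, s l)%:R : R) != 0 by rewrite pnatr_eq0 -lt0n bin_gt0.
have nzD : (\prod_(i < k.-1) ('C(n, drop_stage s l i))%:R : R) != 0.
  by apply/prodf_neq0 => r _; rewrite pnatr_eq0 -lt0n bin_gt0.
rewrite (bigD1_ord l) //= eN /p_coef.
move: nzD; rewrite /drop_stage => nzD.
field.
by rewrite nzD nzf nzC.
Qed.

End Helpers.

Lemma table (R : realFieldType) : [/\ forall j, (j <= 0)%N -> acoef R 0 0 j = 1,
          forall j, (j <= 1)%N -> acoef R 0 1 j = (-1) ^+ j /\ acoef R 1 0 j = 1,
          forall j, (j <= 2)%N -> [/\ acoef R 0 2 j = (-1) ^+ j,
                                      acoef R 1 1 j = 1 - j%:R & acoef R 2 0 j = 1],
          forall j, (j <= 3)%N -> [/\ acoef R 0 3 j = (-1) ^+ j,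
                                      acoef R 1 2 j = (-1) ^+ j * (1 - 2 * j%:R / 3),
                                      acoef R 2 1 j = 1 - 2 * j%:R / 3
                                    & acoef R 3 0 j = 1]
        & forall j, (j <= 4)%N -> [/\ acoef R 0 4 j = (-1) ^+ j,
                                      acoef R 1 3 j = (-1) ^+ j * (1 - j%:R / 2),
                                      acoef R 2 2 j = 1 - j%:R * (4 - j%:R) / 3,
                                      acoef R 3 1 j = 1 - j%:R / 2
                                    & acoef R 4 0 j = 1]].
Proof.
have n2 : (2%:R : R) != 0 by rewrite pnatr_eq0.
have n3 : (3%:R : R) != 0 by rewrite pnatr_eq0.
have n4 : (4%:R : R) != 0 by rewrite pnatr_eq0.
split => j; (do 5? [case: j => [|j]]) => //= _; rewrite /= ?expr0 ?expr1 ?exprS ?expr0;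
  (repeat split); rewrite ?mulr0 ?mul0r ?subr0 ?sub0r; field; rewrite ?n2 ?n3 ?n4 //.
Qed.

Unset Implicit Arguments.
Set Strict Implicit.

Theorem corollary4p1 (R : realFieldType) (n k : nat) (s : 'I_k -> nat) (l : 'I_k)
  (alpha beta : nat) (hs : forall r, (s r <= n)%N) (hab : (alpha + beta <= n)%N) :
  [/\ g_prob R n s l alpha beta
        = f_prob R n (drop_stage s l) alpha beta * p_coef R n s l alpha beta,
      f_prob R n (drop_stage s l) alpha beta
        = f_formula R n (drop_stage s l) alpha beta &
      (* the table of a_{alpha,beta}(j) for alpha+beta <= 4, 0 <= j <= alpha+beta *)
      [/\ forall j, (j <= 0)%N -> acoef R 0 0 j = 1,
          forall j, (j <= 1)%N -> acoef R 0 1 j = (-1) ^+ j /\ acoef R 1 0 j = 1,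
          forall j, (j <= 2)%N -> [/\ acoef R 0 2 j = (-1) ^+ j,
                                      acoef R 1 1 j = 1 - j%:R & acoef R 2 0 j = 1],
          forall j, (j <= 3)%N -> [/\ acoef R 0 3 j = (-1) ^+ j,
                                      acoef R 1 2 j = (-1) ^+ j * (1 - 2 * j%:R / 3),
                                      acoef R 2 1 j = 1 - 2 * j%:R / 3
                                    & acoef R 3 0 j = 1]
        & forall j, (j <= 4)%N -> [/\ acoef R 0 4 j = (-1) ^+ j,
                                      acoef R 1 3 j = (-1) ^+ j * (1 - j%:R / 2),
                                      acoef R 2 2 j = 1 - j%:R * (4 - j%:R) / 3,
                                      acoef R 3 1 j = 1 - j%:R / 2
                                    & acoef R 4 0 j = 1]]].
Proof.
have hs' : forall i, (drop_stage s l i <= n)%N by move=> i; exact: hs.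
split.
- exact: g_main.
- exact: f_main.
- exact: table.
Qed.
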